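(* Let $H,A$ be as in the context and $L\subseteq\ker\epsilon\subset H$ a subspace stable under the quantum double action $h\triangleright x=h_{(1)}xSh_{(2)}$, $a\triangleright x=\langle a,x_{(1)}\rangle x_{(2)}-\langle a,x\rangle1$. Define $[\ ,\ ]:L\otimes L\to L$ by $[x,y]=x_{(1)}\,y\,Sx_{(2)}$ and $\Psi:L\otimes L\to L\otimes L$ by \[\Psi(x\otimes y)=[x_{(1)},y]\otimes x_{(2)}-[x,y]\otimes 1\] (which equals $\sum_a e_a\triangleright y\otimes f^a\triangleright x$ for dual bases $\{e_a\}$ of $H$, $\{f^a\}$ of $A$, and so takes values in $L\otimes L$; here $[h,y]:=h_{(1)}ySh_{(2)}$ for $h\in H$). Then for all $x,y,z\in L$, \[[x,[y,z]]=[[x,y],z]+([\ ,[\ ,z]])\circ\Psi(x\otimes y),\qquad [x,y]=xy-\cdot\,\Psi(x\otimes y),\] where $[\ ,[\ ,z]](u\otimes v)=[u,[v,z]]$ and $\cdot$ is multiplication in $H$.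
   Context: $H,A$ are Hopf algebras over $\mathbb{C}$ with invertible antipodes, non-degenerately paired by a Hopf pairing $\langle\ ,\ \rangle$; Sweedler notation. $\Psi$ is the quantum double braiding on $L\otimes L$. *)

(* Defs.v *)
(* Hopf algebras (possibly infinite-dimensional) over a field,
   with the coproduct given in Sweedler form as a finite list of pairs,
   tensors being compared through all bilinear (resp. trilinear) forms. *)
From mathcomp Require Import all_boot all_algebra.
From mathcomp Require Import reals complex.
Set Implicit Arguments. Unset Strict Implicit. Unset Printing Implicit Defensive.
Import GRing.Theory.
Local Open Scope ring_scope.

Section Tensors.
Variable K : fieldType.

Definition bilin_form (U V : lmodType K) (f : U -> V -> K) : Prop :=
  (forall (a : K) (u u' : U) (v : V), f (a *: u + u') v = a * f u v + f u' v) /\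
  (forall (a : K) (u : U) (v v' : V), f u (a *: v + v') = a * f u v + f u v').

Definition trilin_form (U V W : lmodType K) (f : U -> V -> W -> K) : Prop :=
  (forall (a : K) (u u' : U) (v : V) (w : W),
      f (a *: u + u') v w = a * f u v w + f u' v w) /\
  (forall (a : K) (u : U) (v v' : V) (w : W),
      f u (a *: v + v') w = a * f u v w + f u v' w) /\
  (forall (a : K) (u : U) (v : V) (w w' : W),
      f u v (a *: w + w') = a * f u v w + f u v w').

(* A finite list t = [:: (u_1,v_1); ...] represents the tensor
   sum_i u_i (x) v_i of U (x) V.  Two lists represent the same tensor iff
   all bilinear forms agree on them (U (x) V embeds in Bil(U,V)^* ). *)
Definition teq2 (U V : lmodType K) (t t' : seq (U * V)) : Prop :=
  forall f : U -> V -> K, bilin_form f ->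
    \sum_(p <- t) f p.1 p.2 = \sum_(p <- t') f p.1 p.2.

Definition teq3 (U V W : lmodType K) (t t' : seq (U * V * W)) : Prop :=
  forall f : U -> V -> W -> K, trilin_form f ->
    \sum_(p <- t) f p.1.1 p.1.2 p.2 = \sum_(p <- t') f p.1.1 p.1.2 p.2.

Definition is_hopf (H : algType K) (cop : H -> seq (H * H))
    (eps : H -> K) (S : H -> H) : Prop :=
  [/\ [/\
      (forall (a : K) (x y : H),
          teq2 (cop (a *: x + y))
               ([seq (a *: p.1, p.2) | p <- cop x] ++ cop y)),
      (forall x y : H,
          teq2 (cop (x * y))
               [seq (p.1 * q.1, p.2 * q.2) | p <- cop x, q <- cop y]) &
      teq2 (cop 1) [:: (1, 1)] ],
      (forall x : H,
          teq3 [seq (q.1, q.2, p.2) | p <- cop x, q <- cop p.1]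
               [seq (p.1, q.1, q.2) | p <- cop x, q <- cop p.2]),
      [/\ forall (a : K) (x y : H), eps (a *: x + y) = a * eps x + eps y,
          eps 1 = 1,
          forall x y : H, eps (x * y) = eps x * eps y,
          forall x : H, \sum_(p <- cop x) eps p.1 *: p.2 = x &
          forall x : H, \sum_(p <- cop x) eps p.2 *: p.1 = x] &
      [/\ forall (a : K) (x y : H), S (a *: x + y) = a *: S x + S y,
          forall x : H, \sum_(p <- cop x) S p.1 * p.2 = eps x *: 1 &
          forall x : H, \sum_(p <- cop x) p.1 * S p.2 = eps x *: 1]].

Definition is_hopf_pairing (H A : algType K)
    (copH : H -> seq (H * H)) (epsH : H -> K) (SH : H -> H)
    (copA : A -> seq (A * A)) (epsA : A -> K) (SA : A -> A)
    (pr : A -> H -> K) : Prop :=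
  [/\ bilin_form pr,
      [/\
      (forall (a b : A) (h : H),
          pr (a * b) h = \sum_(p <- copH h) pr a p.1 * pr b p.2) &
      (forall (a : A) (h g : H),
          pr a (h * g) = \sum_(p <- copA a) pr p.1 h * pr p.2 g)],
      (forall h : H, pr 1 h = epsH h),
      (forall a : A, pr a 1 = epsA a) &
      (forall (a : A) (h : H), pr (SA a) h = pr a (SH h))].

Definition nondegenerate_pairing (H A : lmodType K) (pr : A -> H -> K) : Prop :=
  (forall a : A, (forall h : H, pr a h = 0) -> a = 0) /\
  (forall h : H, (forall a : A, pr a h = 0) -> h = 0).

Definition is_subspace (V : lmodType K) (L : V -> Prop) : Prop :=
  L 0 /\ forall (a : K) (u v : V), L u -> L v -> L (a *: u + v).

Section Bracket.
Variables (H : algType K) (cop : H -> seq (H * H)) (S : H -> H).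

Definition adbr (h y : H) : H := \sum_(p <- cop h) p.1 * y * S p.2.

Definition Psi (x y : H) : seq (H * H) :=
  [seq (adbr p.1 y, p.2) | p <- cop x] ++ [:: (- adbr x y, 1)].

End Bracket.
End Tensors.

(* Main.v *)
Require Import Defs.
From mathcomp Require Import all_boot all_algebra.
From mathcomp Require Import reals complex.
Set Implicit Arguments. Unset Strict Implicit. Unset Printing Implicit Defensive.
Import GRing.Theory.
Local Open Scope ring_scope.
Section HopfLemmas.
Variables (K : fieldType) (H A : algType K) (cop : H -> seq (H * H))
  (eps : H -> K) (S : H -> H) (pr : A -> H -> K).
Hypothesis hH : is_hopf cop eps S.
Hypothesis prlin : bilin_form pr.
Hypothesis nd : forall h : H, (forall a : A, pr a h = 0) -> h = 0.

Definition lin (f : H -> H) := forall (a : K) (u v : H), f (a *: u + v) = a *: f u + f v.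
Definition bilH (F : H -> H -> H) := (forall v, lin (fun u => F u v)) /\ (forall u, lin (F u)).
Definition triH (F : H -> H -> H -> H) :=
  (forall v w, lin (fun u => F u v w)) /\ (forall u w, lin (fun v => F u v w)) /\ (forall u v, lin (F u v)).

Lemma lin0 f : lin f -> f 0 = 0.
Proof. move=> hf; have := hf 1 0 0; rewrite !scale1r addr0 => E.
by apply: (@addrI _ (f 0)); rewrite addr0 -E. Qed.

Lemma linZ f a u : lin f -> f (a *: u) = a *: f u.
Proof. by move=> hf; have := hf a u 0; rewrite addr0 (lin0 hf) addr0. Qed.

Lemma linD f u v : lin f -> f (u + v) = f u + f v.
Proof. by move=> hf; have := hf 1 u v; rewrite !scale1r. Qed.

Lemma linN f u : lin f -> f (- u) = - f u.
Proof. by move=> hf; rewrite -scaleN1r linZ // scaleN1r. Qed.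

Lemma linS I (s : seq I) (G : I -> H) f : lin f -> f (\sum_(i <- s) G i) = \sum_(i <- s) f (G i).
Proof. move=> hf; elim: s => [|i s IH]; first by rewrite !big_nil lin0.
by rewrite !big_cons linD // IH. Qed.

Lemma lin_id : lin id. Proof. by []. Qed.
Lemma lin_mull c f : lin f -> lin (fun u => c * f u).
Proof. by move=> hf a u v; rewrite hf mulrDr scalerAr. Qed.
Lemma lin_mulr c f : lin f -> lin (fun u => f u * c).
Proof. by move=> hf a u v; rewrite hf mulrDl scalerAl. Qed.
Lemma lin_comp f g : lin f -> lin g -> lin (fun u => f (g u)).
Proof. by move=> hf hg a u v; rewrite hg hf. Qed.
Lemma lin_sum I (s : seq I) (F : I -> H -> H) : (forall i, lin (F i)) ->
  lin (fun u => \sum_(i <- s) F i u).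
Proof. move=> hF a u v; rewrite scaler_sumr -big_split /=.
by apply: eq_bigr => i _; rewrite hF. Qed.
Lemma lin_scale c f : lin f -> lin (fun u => c *: f u).
Proof. by move=> hf a u v; rewrite hf scalerDr !scalerA mulrC. Qed.


Lemma prZD a c u v : pr a (c *: u + v) = c * pr a u + pr a v.
Proof. by case: prlin => _ ->. Qed.
Lemma pr0 a : pr a 0 = 0.
Proof. have := prZD a 1 0 0; rewrite scale1r addr0 => E.
by rewrite mul1r in E; apply: (@addIr _ (pr a 0)); rewrite add0r -E. Qed.
Lemma prD a u v : pr a (u + v) = pr a u + pr a v.
Proof. by rewrite -(scale1r u) prZD mul1r scale1r. Qed.
Lemma pr_sum a I (s : seq I) (G : I -> H) : pr a (\sum_(i <- s) G i) = \sum_(i <- s) pr a (G i).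
Proof. elim: s => [|i s IH]; first by rewrite !big_nil pr0.
by rewrite !big_cons prD IH. Qed.
Lemma sep u v : (forall a, pr a u = pr a v) -> u = v.
Proof. move=> E; apply/eqP; rewrite -subr_eq0; apply/eqP; apply: nd => a.
by rewrite -scaleN1r addrC prZD E mulN1r addNr. Qed.

Lemma teq2H (t t' : seq (H * H)) (F : H -> H -> H) : bilH F -> teq2 t t' ->
  \sum_(p <- t) F p.1 p.2 = \sum_(p <- t') F p.1 p.2.
Proof.
move=> [F1 F2] E; apply: sep => a; rewrite !pr_sum.
apply: (E (fun u v => pr a (F u v))); split.
- by move=> c u u' v; rewrite F1 prZD.
- by move=> c u v v'; rewrite F2 prZD.
Qed.

Lemma teq3H (t t' : seq (H * H * H)) (F : H -> H -> H -> H) : triH F -> teq3 t t' ->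
  \sum_(p <- t) F p.1.1 p.1.2 p.2 = \sum_(p <- t') F p.1.1 p.1.2 p.2.
Proof.
move=> [F1 [F2 F3]] E; apply: sep => a; rewrite !pr_sum.
apply: (E (fun u v w => pr a (F u v w))); split; [|split].
- by move=> c u u' v w; rewrite F1 prZD.
- by move=> c u v v' w; rewrite F2 prZD.
- by move=> c u v w w'; rewrite F3 prZD.
Qed.

Lemma lin_cop (B : H -> H -> H) : bilH B -> lin (fun u => \sum_(p <- cop u) B p.1 p.2).
Proof.
move=> hB c u v; case: hH => [[hl _ _] _ _ _].
rewrite (teq2H hB (hl c u v)) big_cat big_map /= scaler_sumr; congr (_ + _).
by apply: eq_bigr => p _; case: hB => hB1 _; exact: (@linZ (fun u => B u p.2) c p.1 (hB1 p.2)).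
Qed.

Lemma cop_mul (B : H -> H -> H) x y : bilH B ->
  \sum_(r <- cop (x * y)) B r.1 r.2 =
  \sum_(p <- cop x) \sum_(q <- cop y) B (p.1 * q.1) (p.2 * q.2).
Proof.
move=> hB; case: hH => [[_ hm _] _ _ _].
by rewrite (teq2H hB (hm x y)) big_allpairs_dep.
Qed.

Lemma cop_one (B : H -> H -> H) : bilH B -> \sum_(r <- cop 1) B r.1 r.2 = B 1 1.
Proof.
move=> hB; case: hH => [[_ _ h1] _ _ _].
by rewrite (teq2H hB h1) big_cons big_nil addr0.
Qed.

Lemma coassH (F : H -> H -> H -> H) x : triH F ->
  \sum_(p <- cop x) \sum_(q <- cop p.1) F q.1 q.2 p.2 =
  \sum_(p <- cop x) \sum_(q <- cop p.2) F p.1 q.1 q.2.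
Proof.
move=> hF; case: hH => [_ hc _ _].
have := teq3H hF (hc x); rewrite !big_allpairs_dep /=; done.
Qed.

Lemma counit1 f x : lin f -> \sum_(p <- cop x) eps p.1 *: f p.2 = f x.
Proof.
move=> hf; case: hH => [_ _ [_ _ _ e1 _] _].
rewrite -{2}(e1 x) linS //; apply: eq_bigr => p _; by rewrite linZ.
Qed.
Lemma counit2 f x : lin f -> \sum_(p <- cop x) eps p.2 *: f p.1 = f x.
Proof.
move=> hf; case: hH => [_ _ [_ _ _ _ e2] _].
rewrite -{2}(e2 x) linS //; apply: eq_bigr => p _; by rewrite linZ.
Qed.
Lemma linSS : lin S. Proof. by case: hH => [_ _ _ [s1 _ _]]. Qed.
Lemma antip1 x : \sum_(p <- cop x) S p.1 * p.2 = eps x *: 1.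
Proof. by case: hH => [_ _ _ [_ s2 _]]. Qed.
Lemma antip2 x : \sum_(p <- cop x) p.1 * S p.2 = eps x *: 1.
Proof. by case: hH => [_ _ _ [_ _ s3]]. Qed.
Lemma epsM x y : eps (x * y) = eps x * eps y.
Proof. by case: hH => [_ _ [_ _ e _ _] _]. Qed.
Lemma eps1 : eps 1 = 1.
Proof. by case: hH => [_ _ [_ e _ _ _] _]. Qed.

Lemma SD u v : S (u + v) = S u + S v. Proof. exact: linD linSS. Qed.
Lemma SZ c u : S (c *: u) = c *: S u. Proof. exact: linZ linSS. Qed.

Lemma SZD c u v : S (c *: u + v) = c *: S u + S v. Proof. exact: linSS. Qed.
Lemma mulZDr (x : H) c u v : x * (c *: u + v) = c *: (x * u) + x * v.
Proof. by rewrite mulrDr scalerAr. Qed.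
Lemma mulZDl (x : H) c u v : (c *: u + v) * x = c *: (u * x) + v * x.
Proof. by rewrite mulrDl scalerAl. Qed.

Ltac linsimp := move=> ? ? ?; rewrite ?(mulZDr, mulZDl, SZD).

Lemma L1 u v w g : \sum_(q <- cop g) \sum_(q' <- cop q.1)
   S (u * q'.1) * (v * q'.2) * (S q.2 * w) = S (u * g) * v * w.
Proof.
have hF : triH (fun a b c => S (u * a) * (v * b) * (S c * w)).
  by split; [|split] => *; linsimp.
rewrite (coassH g hF) /=.
transitivity (\sum_(q <- cop g) eps q.2 *: (S (u * q.1) * v * w)).
  apply: eq_bigr => q _.
  transitivity (S (u * q.1) * v * (\sum_(q' <- cop q.2) q'.1 * S q'.2) * w).
    rewrite mulr_sumr mulr_suml; apply: eq_bigr => q' _; by rewrite !mulrA.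
  by rewrite antip2 -scalerAr mulr1 -scalerAl.
apply: (@counit2 (fun a => S (u * a) * v * w)); by linsimp.
Qed.

Lemma S_mul h g : S (h * g) = S g * S h.
Proof.
transitivity (\sum_(p <- cop h) \sum_(p' <- cop p.1) S (p'.1 * g) * p'.2 * S p.2).
  have hF : triH (fun a b c => S (a * g) * b * S c).
    by split; [|split] => *; linsimp.
  rewrite (coassH h hF) /=.
  transitivity (\sum_(p <- cop h) eps p.2 *: S (p.1 * g)).
    by rewrite (@counit2 (fun a => S (a * g))) //; linsimp.
  apply: eq_bigr => p _; apply: esym.
  transitivity (S (p.1 * g) * \sum_(p' <- cop p.2) p'.1 * S p'.2).
    by rewrite mulr_sumr; apply: eq_bigr => p' _; rewrite mulrA.
  by rewrite antip2 -scalerAr mulr1.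
transitivity (\sum_(p <- cop h) \sum_(p' <- cop p.1) \sum_(q <- cop g) \sum_(q' <- cop q.1)
   S (p'.1 * q'.1) * (p'.2 * q'.2) * (S q.2 * S p.2)).
  by apply: eq_bigr => p _; apply: eq_bigr => p' _; rewrite L1.
transitivity (\sum_(p <- cop h) \sum_(q <- cop g) \sum_(p' <- cop p.1) \sum_(q' <- cop q.1)
   S (p'.1 * q'.1) * (p'.2 * q'.2) * (S q.2 * S p.2)).
  by apply: eq_bigr => p _; rewrite exchange_big.
transitivity (\sum_(p <- cop h) \sum_(q <- cop g) \sum_(r <- cop (p.1 * q.1))
   S r.1 * r.2 * (S q.2 * S p.2)).
  apply: eq_bigr => p _; apply: eq_bigr => q _.
  have hB : bilH (fun a b => S a * b * (S q.2 * S p.2)) by split => *; linsimp.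
  by rewrite (cop_mul _ _ hB).
transitivity (\sum_(p <- cop h) \sum_(q <- cop g) (eps p.1 * eps q.1) *: (S q.2 * S p.2)).
  apply: eq_bigr => p _; apply: eq_bigr => q _.
  by rewrite -mulr_suml antip1 epsM -scalerAl mul1r.
transitivity (\sum_(p <- cop h) eps p.1 *: (S g * S p.2)).
  apply: eq_bigr => p _; rewrite -(@counit1 (fun a => S a * S p.2)); last by linsimp.
  by rewrite scaler_sumr; apply: eq_bigr => q _; rewrite scalerA.
by rewrite (@counit1 (fun a => S g * S a)) //; linsimp.
Qed.

Notation ad := (adbr cop S).

Lemma ad_lin z : lin (fun h => ad h z).
Proof.
have hB : bilH (fun a b => a * z * S b) by split => *; linsimp.
exact: (@lin_cop (fun a b => a * z * S b) hB).
Qed.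

Lemma adM u v z : ad (u * v) z = ad u (ad v z).
Proof.
have hB : bilH (fun a b => a * z * S b) by split => *; linsimp.
rewrite /adbr (cop_mul _ _ hB); apply: eq_bigr => p _.
rewrite mulr_sumr mulr_suml; apply: eq_bigr => q _.
by rewrite S_mul !mulrA.
Qed.

Lemma S1 : S 1 = 1.
Proof.
have hB : bilH (fun a b => S a * b) by split => *; linsimp.
by have := antip1 1; rewrite (cop_one hB) eps1 scale1r mulr1.
Qed.

Lemma ad1 z : ad 1 z = z.
Proof.
have hB : bilH (fun a b => a * z * S b) by split => *; linsimp.
by rewrite /adbr (cop_one hB) S1 mul1r mulr1.
Qed.

Lemma keyX x y : \sum_(p <- cop x) ad p.1 y * p.2 = x * y.
Proof.
transitivity (\sum_(p <- cop x) \sum_(q <- cop p.1) q.1 * y * S q.2 * p.2).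
  by apply: eq_bigr => p _; rewrite /adbr mulr_suml.
have hF : triH (fun a b c => a * y * S b * c) by split; [|split] => *; linsimp.
rewrite (coassH x hF) /=.
transitivity (\sum_(p <- cop x) eps p.2 *: (p.1 * y)).
  apply: eq_bigr => p _.
  transitivity (p.1 * y * \sum_(q <- cop p.2) S q.1 * q.2).
    by rewrite mulr_sumr; apply: eq_bigr => q _; rewrite !mulrA.
  by rewrite antip1 -scalerAr mulr1.
by rewrite (@counit2 (fun a => a * y)) //; linsimp.
Qed.

Lemma main_id x y z :
    ad x (ad y z) = ad (ad x y) z + \sum_(p <- Psi cop S x y) ad p.1 (ad p.2 z)
 /\ ad x y = x * y - \sum_(p <- Psi cop S x y) p.1 * p.2.
Proof.
rewrite /Psi !big_cat !big_map !big_cons !big_nil ?addr0 /=; split.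
  rewrite ad1 (linN _ (ad_lin z)).
  have -> : \sum_(p <- cop x) ad (ad p.1 y) (ad p.2 z) = ad x (ad y z).
    transitivity (\sum_(p <- cop x) ad (ad p.1 y * p.2) z).
      by apply: eq_bigr => p _; rewrite adM.
    by rewrite -(linS _ _ (ad_lin z)) keyX adM.
  by rewrite addr0 addrCA subrr addr0.
by rewrite addr0 keyX mulr1 opprD opprK addrA subrr add0r.
Qed.

End HopfLemmas.

Unset Implicit Arguments.
Theorem proposition2p4 (R : realType) (H A : algType R[i])
    (copH : H -> seq (H * H)) (epsH : H -> R[i]) (SH : H -> H)
    (copA : A -> seq (A * A)) (epsA : A -> R[i]) (SA : A -> A)
    (pr : A -> H -> R[i])
    (hH : is_hopf copH epsH SH) (hSH : bijective SH)
    (hA : is_hopf copA epsA SA) (hSA : bijective SA)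
    (hpr : is_hopf_pairing copH epsH SH copA epsA SA pr)
    (hnd : nondegenerate_pairing pr)
    (L : H -> Prop) (hL : is_subspace L)
    (hLeps : forall x, L x -> epsH x = 0)
    (hLH : forall h x, L x -> L (adbr copH SH h x))
    (hLA : forall a x, L x ->
             L (\sum_(p <- copH x) pr a p.1 *: p.2 - pr a x *: 1)) :
  forall x y z : H, L x -> L y -> L z ->
    adbr copH SH x (adbr copH SH y z)
      = adbr copH SH (adbr copH SH x y) z
        + \sum_(p <- Psi copH SH x y) adbr copH SH p.1 (adbr copH SH p.2 z)
    /\ adbr copH SH x y = x * y - \sum_(p <- Psi copH SH x y) p.1 * p.2.
Proof.
move=> x y z _ _ _.
case: hpr => hbil _ _ _ _.
case: hnd => _ hnd2.
exact: (main_id hH hbil hnd2).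
Qed.
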